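(* Let $n=3$, let $a_{11},a_{22},a_{33}\ge0$, and let $a_{13}=a_{21}=a_{32}=1$ and $a_{12}=a_{23}=a_{31}=0$. Then there exist $\pi_1,\pi_2,\pi_3>0$ such that $$\kappa:=\min_{i=1,2,3}\Big(8\pi_ia_{ii}-\sum_{j=1,\,j\ne i}^3\pi_ja_{ji}\Big)>0$$ if and only if $a_{11}a_{22}a_{33}>8^{-3}$. *)

(* Defs.v *)
From Stdlib Require Import Reals.
Open Scope R_scope.

Definition amat (a11 a22 a33 : R) (i j : nat) : R :=
  match i, j with
  | 1%nat, 1%nat => a11
  | 2%nat, 2%nat => a22
  | 3%nat, 3%nat => a33
  | 1%nat, 3%nat => 1
  | 2%nat, 1%nat => 1
  | 3%nat, 2%nat => 1
  | _, _ => 0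
  end.

Definition kterm (a : nat -> nat -> R) (pi : nat -> R) (i : nat) : R :=
  8 * pi i * a i i
  - (if Nat.eqb i 1 then 0 else pi 1%nat * a 1%nat i)
  - (if Nat.eqb i 2 then 0 else pi 2%nat * a 2%nat i)
  - (if Nat.eqb i 3 then 0 else pi 3%nat * a 3%nat i).

Definition kappa (a : nat -> nat -> R) (pi : nat -> R) : R :=
  Rmin (kterm a pi 1%nat) (Rmin (kterm a pi 2%nat) (kterm a pi 3%nat)).

(* Main.v *)
Require Import Defs.
From Stdlib Require Import Reals Lra Psatz.
Open Scope R_scope.

Theorem lemma15 (a11 a22 a33 : R) :
  0 <= a11 -> 0 <= a22 -> 0 <= a33 ->
  ((exists pi : nat -> R,
       0 < pi 1%nat /\ 0 < pi 2%nat /\ 0 < pi 3%nat /\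
       kappa (amat a11 a22 a33) pi > 0)
   <-> a11 * a22 * a33 > / (8 ^ 3)).
Proof.
  intros H1 H2 H3. unfold kappa, kterm, amat; simpl.
  split.
  - intros [p [P1 [P2 [P3 K]]]].
    assert (K1 : 0 < 8 * p 1%nat * a11 - 0 - p 2%nat * 1 - p 3%nat * 0)
      by (eapply Rlt_le_trans; [exact K| apply Rmin_l]).
    assert (K2 : 0 < 8 * p 2%nat * a22 - p 1%nat * 0 - 0 - p 3%nat * 1)
      by (eapply Rlt_le_trans; [exact K| eapply Rle_trans; [apply Rmin_r| apply Rmin_l]]).
    assert (K3 : 0 < 8 * p 3%nat * a33 - p 1%nat * 1 - p 2%nat * 0 - 0)
      by (eapply Rlt_le_trans; [exact K| eapply Rle_trans; [apply Rmin_r| apply Rmin_r]]).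
    assert (S1 : 8 * a33 * p 3%nat <= 8 * a33 * (8 * a22 * p 2%nat)) by nra.
    assert (S2 : 8 * a33 * (8 * a22 * p 2%nat) <= 8 * a33 * (8 * a22 * (8 * a11 * p 1%nat))).
    { apply Rmult_le_compat_l; [lra|]. apply Rmult_le_compat_l; nra. }
    assert (S3 : p 1%nat < 512 * (a11 * a22 * a33) * p 1%nat) by nra.
    assert (S4 : 1 < 512 * (a11 * a22 * a33)).
    { apply (Rmult_lt_reg_r (p 1%nat)); nra. }
    assert (E : / 512 * 512 = 1) by (apply Rinv_l; lra).
    replace (8 * (8 * (8 * 1))) with 512 by ring. unfold Rgt.
    apply (Rmult_lt_reg_r 512); [lra|]. rewrite E. lra.
  - intros HP. replace (8 * (8 * (8 * 1))) with 512 in HP by ring.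
    assert (Hr : 1 < 512 * (a11 * a22 * a33)).
    { assert (E : / 512 * 512 = 1) by (apply Rinv_l; lra).
      apply (Rmult_lt_compat_r 512) in HP; [|lra]. rewrite E in HP; lra. }
    set (x := 8 * a11) in *. set (y := 8 * a22). set (z := 8 * a33).
    assert (Hxyz : x * y * z > 1) by (unfold x, y, z; lra).
    assert (Hx : 0 < x). { destruct (Rle_lt_or_eq_dec 0 a11 H1); [unfold x; lra|].
      subst a11. nra. }
    assert (Hy : 0 < y). { destruct (Rle_lt_or_eq_dec 0 a22 H2); [unfold y; lra|].
      rewrite <- e in Hr. nra. }
    assert (Hz : 0 < z). { destruct (Rle_lt_or_eq_dec 0 a33 H3); [unfold z; lra|].
      rewrite <- e in Hr. nra. }
    set (m := (1 + x * y * z) / 2).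
    assert (Hm1 : 1 < m) by (unfold m; lra).
    assert (Hm2 : m < x * y * z) by (unfold m; lra).
    set (k := sqrt m).
    assert (Hk2 : k * k = m) by (apply sqrt_sqrt; lra).
    assert (Hk1 : 1 < k).
    { unfold k. rewrite <- sqrt_1. apply sqrt_lt_1; lra. }
    exists (fun i => match i with 1%nat => 1 | 2%nat => m / (y * z) | _ => k / z end).
    simpl.
    assert (Hyz : 0 < y * z) by nra.
    split; [lra|]. split; [apply Rdiv_lt_0_compat; lra|].
    split; [apply Rdiv_lt_0_compat; lra|].
    apply Rmin_glb_lt; [|apply Rmin_glb_lt].
    + replace (8 * 1 * a11 - 0 - m / (y * z) * 1 - k / z * 0) with (x - m / (y*z))
        by (unfold x; ring).
      apply Rlt_0_minus. apply (Rmult_lt_reg_r (y * z)); [lra|].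
      unfold Rdiv. rewrite Rmult_assoc, Rinv_l; lra.
    + replace (8 * (m / (y * z)) * a22 - 1 * 0 - 0 - k / z * 1) with ((k * k - k) / z)
        by (unfold y in *; rewrite Hk2; field; repeat split; lra).
      apply Rdiv_lt_0_compat; nra.
    + replace (8 * (k / z) * a33 - 1 * 1 - m / (y * z) * 0 - 0) with (k - 1)
        by (unfold z in *; field; repeat split; lra).
      lra.
Qed.
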